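(* Let $E$ be a concurrent execution, in which each operation has an invocation time and, if it is complete, a later response time; an incomplete operation never ends. Partition all the complete operations of $E$, together with an arbitrary subset of the incomplete operations of $E$, into two sets $A$ and $B$. Build a total order $L$ as follows. (1) For each operation in $A$, choose a point in time inside its interval of execution (at or after its invocation, and at or before its response if it has one). Order the operations of $A$ in $L$ according to these chosen points. (2) Then consider the operations of $B$ one at a time, in increasing order of their invocation times in $E$. For the operation $op$ currently considered, let $op'$ be the operation that comes earliest in $L$ among those already placed in $L$ that are invoked in $E$ after $op$ ends in $E$. Insert $op$ into $L$ immediately before $op'$. If no such $op'$ exists, append $op$ to the end of $L$. Then $L$ respects the real-time order of $E$: whenever $op_1$ and $op_2$ are operations placed in $L$ and $op_1$ ends in $E$ before $op_2$ is invoked, $op_1$ precedes $op_2$ in $L$. *)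

(* Defs.v *)
From mathcomp Require Import all_boot all_order all_algebra.
Set Implicit Arguments. Unset Strict Implicit. Unset Printing Implicit Defensive.
Import Order.TTheory GRing.Theory Num.Theory.
Local Open Scope ring_scope.

Section Exec.
Variables (R : realDomainType) (T : eqType).
(* inv o : invocation time of o; resp o = Some r : response time r of a
   complete operation, resp o = None : o is incomplete (never ends). *)
Variables (inv : T -> R) (resp : T -> option R).

Definition ends_before (o1 o2 : T) : bool :=
  if resp o1 is Some r then r < inv o2 else false.

(* Step (2) for one operation op: insert op immediately before the earliest
   op' in L invoked after op ends; append if there is none
   (find returns size L in that case). *)
Definition insertB (L : seq T) (op : T) : seq T :=
  let i := find (ends_before op) L in take i L ++ op :: drop i L.

Definition buildL (sA sB : seq T) : seq T := foldl insertB sA sB.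
End Exec.

(* Main.v *)
Require Import Defs.
From mathcomp Require Import all_boot all_order all_algebra.
From mathcomp Require Import zify.
Set Implicit Arguments. Unset Strict Implicit.
Import Order.TTheory GRing.Theory Num.Theory.
Local Open Scope ring_scope.

Definition Pinv (R : realDomainType) (T : eqType) (inv : T -> R)
  (resp : T -> option R) (L : seq T) : Prop :=
  forall o1 o2, o1 \in L -> o2 \in L ->
    ends_before inv resp o1 o2 -> (index o1 L < index o2 L)%N.

Lemma eb_irr (R : realDomainType) (T : eqType) (inv : T -> R)
  (resp : T -> option R) (Hwf : forall o r, resp o = Some r -> inv o < r) o :
  ends_before inv resp o o = false.
Proof.
rewrite /ends_before; case E: (resp o) => [r|] //.
by apply/negbTE; rewrite -leNgt ltW // (Hwf _ _ E).
Qed.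

Lemma index_split (T : eqType) (L : seq T) (i : nat) (op y : T) :
  (i <= size L)%N -> op \notin L -> y \in L ->
  index y (take i L ++ op :: drop i L) =
    (index y L + (i <= index y L))%N.
Proof.
move=> hi hop hy.
have hyop : (op == y) = false.
  by apply/negbTE; apply: contraNneq hop => ->.
have E : index y L = index y (take i L ++ drop i L) by rewrite cat_take_drop.
rewrite E !index_cat /= hyop size_takel //.
case: ifP => ht.
  have := index_mem y (take i L); rewrite ht size_takel // => /= h.
  by rewrite leqNgt h addn0.
by rewrite leq_addr addn1 addnS.
Qed.

Lemma index_op (T : eqType) (L : seq T) (i : nat) (op : T) :
  (i <= size L)%N -> op \notin L ->
  index op (take i L ++ op :: drop i L) = i.
Proof.
move=> hi hop; rewrite index_cat size_takel //= eqxx addn0.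
case: ifP => // h; by move: hop; rewrite (mem_take h).
Qed.

Lemma index_nth_le (T : eqType) (L : seq T) (x0 : T) (i : nat) :
  (index (nth x0 L i) L <= i)%N.
Proof.
rewrite leqNgt; apply/negP => h.
have := before_find x0 h; by rewrite /= eqxx.
Qed.

Lemma step (R : realDomainType) (T : eqType) (inv : T -> R)
  (resp : T -> option R) (Hwf : forall o r, resp o = Some r -> inv o < r)
  (L : seq T) (op : T) :
  op \notin L -> Pinv inv resp L -> Pinv inv resp (insertB inv resp L op).
Proof.
move=> hop P; rewrite /insertB.
set i := find _ L.
have hi : (i <= size L)%N by apply: find_size.
have mem o : (o \in take i L ++ op :: drop i L) = (o == op) || (o \in L).
  by rewrite mem_cat inE orbCA -mem_cat cat_take_drop.
move=> o1 o2; rewrite !mem ; case/orP=> [/eqP-> | h1]; case/orP=> [/eqP-> | h2].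
- by rewrite eb_irr.
- move=> heb; rewrite index_op // index_split //.
  have hle : (i <= index o2 L)%N.
    rewrite leqNgt; apply/negP=> hlt.
    have := before_find o2 hlt; by rewrite nth_index // heb.
  by rewrite hle; lia.
- move=> heb; rewrite index_op // index_split //.
  suff hlt : (index o1 L < i)%N by rewrite (leqNgt i) hlt addn0.
  rewrite ltnNge; apply/negP => hle.
  have hs : (i < size L)%N by apply: leq_ltn_trans hle _; rewrite index_mem.
  have hhas : has (ends_before inv resp op) L by rewrite has_find.
  have hx := nth_find op hhas; rewrite -/i in hx.
  set x := nth op L i in hx.
  have hxL : x \in L by rewrite mem_nth.
  have heb2 : ends_before inv resp o1 x.
    move: heb hx; rewrite /ends_before.
    case E1: (resp o1) => [r1|] //; case E2: (resp op) => [r|] // h1' h2'.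
    have := Hwf _ _ E2 => h3.
    by rewrite (lt_trans h1' (lt_trans h3 h2')).
  have := P _ _ h1 hxL heb2.
  have := index_nth_le L op i; rewrite -/x => ha hb.
  lia.
- move=> heb; have ne1 : o1 != op by apply: contraNneq hop => <-.
  have ne2 : o2 != op by apply: contraNneq hop => <-.
  rewrite !index_split //; have := P _ _ h1 h2 heb.
  case: (leqP i (index o1 L)); case: (leqP i (index o2 L)); lia.
Qed.

Lemma perm_ins (R : realDomainType) (T : eqType) (inv : T -> R)
  (resp : T -> option R) (L : seq T) (op : T) :
  perm_eq (insertB inv resp L op) (op :: L).
Proof.
rewrite /insertB; set i := find _ _.
rewrite -[in X in perm_eq _ X](cat_take_drop i L).
by rewrite -cat1s perm_catCA.
Qed.

Lemma fold_inv (R : realDomainType) (T : eqType) (inv : T -> R)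
  (resp : T -> option R) (Hwf : forall o r, resp o = Some r -> inv o < r)
  (s L : seq T) :
  uniq (L ++ s) -> Pinv inv resp L -> Pinv inv resp (foldl (insertB inv resp) L s).
Proof.
elim: s L => [|op s IH] L //= hu P.
apply: IH.
  rewrite (perm_uniq (perm_cat (perm_ins inv resp L op) (perm_refl s))).
  have hp : perm_eq (L ++ [:: op] ++ s) ([:: op] ++ L ++ s).
    by rewrite perm_catCA perm_refl.
  by rewrite -(perm_uniq hp).
apply: step => //.
by move: hu; rewrite uniq_catC /= mem_cat negb_or => /andP[/andP[]].
Qed.

Theorem lemma1 (R : realDomainType) (T : finType)
    (inv : T -> R) (resp : T -> option R)
    (* a complete operation responds after it is invoked *)
    (Hwf : forall o r, resp o = Some r -> inv o < r)
    (* sA : the operations of A, sB : the operations of B *)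
    (sA sB : seq T)
    (* A and B are disjoint and duplicate-free *)
    (Huniq : uniq (sA ++ sB))
    (* every complete operation lies in A or B *)
    (Hcomplete : forall o, resp o != None -> o \in sA ++ sB)
    (* chosen points inside the execution intervals of the operations of A *)
    (pt : T -> R)
    (Hpt_inv : forall o, o \in sA -> inv o <= pt o)
    (Hpt_resp : forall o r, o \in sA -> resp o = Some r -> pt o <= r)
    (* sA orders A according to the chosen points *)
    (HsA : sorted (fun x y => pt x <= pt y) sA)
    (* sB lists B in increasing order of invocation times *)
    (HsB : sorted (fun x y => inv x <= inv y) sB) :
  let L := buildL inv resp sA sB in
  forall o1 o2, o1 \in L -> o2 \in L ->
    ends_before inv resp o1 o2 -> (index o1 L < index o2 L)%N.
Proof.
apply: fold_inv => // o1 o2 h1 h2 heb.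
have hlt : pt o1 < pt o2.
  move: heb; rewrite /ends_before; case E: (resp o1) => [r|] // h.
  exact: le_lt_trans (Hpt_resp _ _ h1 E) (lt_le_trans h (Hpt_inv _ h2)).
rewrite ltnNge; apply/negP => hle.
have htr : transitive (fun x y : T => pt x <= pt y).
  by move=> y x z; apply: le_trans.
have hrf : reflexive (fun x y : T => pt x <= pt y) by move=> x; apply: lexx.
have m2 : index o2 sA \in [pred n | (n < size sA)%N] by rewrite inE index_mem.
have m1 : index o1 sA \in [pred n | (n < size sA)%N] by rewrite inE index_mem.
have := sorted_leq_nth htr hrf o1 HsA _ _ m2 m1 hle.
move=> h; have e1 := nth_index o1 h1; have e2 := nth_index o1 h2.
rewrite e1 e2 in h.
have := lt_le_trans hlt h.
by rewrite ltxx.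
Qed.
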